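(* Let $n\in\mathbb{Z}_+$, $\mathbf{a}=(a_n,\dots,a_{2n})\in\mathbb{C}^{n+1}$, $\lambda\in\mathbb{C}^*$, $\alpha\in\mathbb{C}$ and $h\in\mathbb{C}[t]$. Let $\mathfrak{b}_{\lambda,n+1}=\mathrm{span}\{d_k-\lambda^{k-n}d_n\mid k\ge n+1\}\subseteq\mathrm{Vir}$, and let $\mathbb{C}[t]_{\alpha,h,\mathbf{a}}$ be $\mathbb{C}[t]$ with the $\mathfrak{b}_{\lambda,n+1}$-module structure $$(d_k-\lambda^{k-n}d_n)\circ f=(k-n)\lambda^k\big(G(f)-(k+n)\alpha F(f)\big)+(a_k-\lambda^{k-n}a_n)f,\qquad k\ge n+1,$$ where $a_k:=0$ for $k>2n$. Then $\mathbb{C}[t]_{\alpha,h,\mathbf{a}}$ is an irreducible $\mathfrak{b}_{\lambda,n+1}$-module if and only if $\alpha\neq0$ and $\deg(h)=1$.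
   Context: $\mathrm{Vir}$ is the Lie algebra with basis $\{d_i,c\mid i\in\mathbb{Z}\}$ and brackets $[d_i,d_j]=(j-i)d_{i+j}+\delta_{i,-j}\frac{i^3-i}{12}c$, $[c,d_i]=0$; $\mathfrak{b}_{\lambda,n+1}$ is a Lie subalgebra. For $\alpha\in\mathbb{C}$, $h\in\mathbb{C}[t]$, the operators on $\mathbb{C}[t]$ are $F(f)=\frac{h(t)-h(\alpha)}{t-\alpha}f(t)-f'(t)$ and $G(f)=h(\alpha)f+tF(f)$. *)

(* Defs.v *)
From HB Require Import structures.
From mathcomp Require Import all_boot all_order all_algebra.
From mathcomp Require Import complex.
From mathcomp Require Import Rstruct.
Set Implicit Arguments. Unset Strict Implicit. Unset Printing Implicit Defensive.
Import Order.TTheory GRing.Theory Num.Theory.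
Local Open Scope ring_scope.

Definition C : Type := (Rdefinitions.R)[i].
HB.instance Definition _ := GRing.Field.on C.

Definition opF (alpha : C) (h f : {poly C}) : {poly C} :=
  ((h - (h.[alpha])%:P) %/ ('X - alpha%:P)) * f - f^`().

Definition opG (alpha : C) (h f : {poly C}) : {poly C} :=
  h.[alpha] *: f + 'X * opF alpha h f.

(* a = (a_n, ..., a_{2n}) given as a function on nat (only the values at
   indices n..2n are used); the convention a_k := 0 for k > 2n. *)
Definition aext (n : nat) (a : nat -> C) (k : nat) : C :=
  if (k <= 2 * n)%N then a k else 0.

(* Action of the basis element d_k - lambda^(k-n) d_n (k >= n+1) on C[t]. *)
Definition bact (n : nat) (a : nat -> C) (lambda alpha : C) (h : {poly C})
    (k : nat) (f : {poly C}) : {poly C} :=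
  ((k - n)%:R * lambda ^+ k) *:
     (opG alpha h f - ((k + n)%:R * alpha) *: opF alpha h f)
  + (aext n a k - lambda ^+ (k - n) * aext n a n) *: f.

Definition is_submodule (n : nat) (a : nat -> C) (lambda alpha : C)
    (h : {poly C}) (W : {poly C} -> Prop) : Prop :=
  [/\ W 0,
      (forall f g, W f -> W g -> W (f + g)),
      (forall (c : C) f, W f -> W (c *: f)) &
      (forall (k : nat) f, (n < k)%N -> W f -> W (bact n a lambda alpha h k f))].

Definition irreducible_bmodule (n : nat) (a : nat -> C) (lambda alpha : C)
    (h : {poly C}) : Prop :=
  (exists f : {poly C}, f != 0) /\
  forall W, is_submodule n a lambda alpha h W ->
    (forall f, W f -> f = 0) \/ (forall f, W f).

(* Main.v *)
Require Import Defs.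
From HB Require Import structures.
From mathcomp Require Import all_boot all_order all_algebra.
From mathcomp Require Import complex Rstruct.
From mathcomp Require Import ring zify.
Import GRing.Theory.
Import Num.Theory.
Local Open Scope ring_scope.
From Stdlib Require Import Classical.

Definition qq (alpha : C) (h : {poly C}) := (h - (h.[alpha])%:P) %/ ('X - alpha%:P).
Definition DD alpha h (f : {poly C}) := qq alpha h * f - f^`().

Lemma bact_big n a lambda alpha h j f :
  bact n a lambda alpha h (2 * n + j.+1) f =
  ((n + j.+1)%:R * lambda ^+ (2 * n + j.+1)) *:
     (h.[alpha] *: f + 'X * DD alpha h f - ((3 * n + j.+1)%:R * alpha) *: DD alpha h f)
  - (lambda ^+ (n + j.+1) * a n) *: f.
Proof.
rewrite /bact /aext /opG /opF -/(DD alpha h f).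
have -> : (2 * n + j.+1 <= 2 * n)%N = false by apply/negbTE; rewrite -ltnNge; lia.
have -> : (n <= 2 * n)%N by lia.
have -> : (2 * n + j.+1 - n = n + j.+1)%N by lia.
have -> : (2 * n + j.+1 + n = 3 * n + j.+1)%N by lia.
by rewrite sub0r scaleNr.
Qed.

Lemma stepA_u n a lambda alpha h f :
  lambda != 0 ->
  (-2 * alpha * lambda ^+ (2 * n + 3)) *: DD alpha h f =
  lambda ^+ 2 *: bact n a lambda alpha h (2 * n + 1) f
  - (2 * lambda) *: bact n a lambda alpha h (2 * n + 2) f
  + bact n a lambda alpha h (2 * n + 3) f.
Proof.
move=> _.
rewrite !bact_big.
rewrite -!mul_polyC.
rewrite !exprD.
ring.
Qed.

Lemma stepA_v n a lambda alpha h f :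
  lambda ^+ (2 * n + 3) *: ('X * DD alpha h f) =
  lambda *: bact n a lambda alpha h (2 * n + 2) f
  - lambda ^+ 2 *: bact n a lambda alpha h (2 * n + 1) f
  + ((4 * n + 3)%:R * alpha * lambda ^+ (2 * n + 3)) *: DD alpha h f
  - (lambda ^+ (2 * n + 3) * h.[alpha]) *: f.
Proof.
rewrite !bact_big -!mul_polyC !exprD.
ring.
Qed.

Lemma q_fact alpha h : qq alpha h * ('X - alpha%:P) = h - h.[alpha]%:P.
Proof.
rewrite /qq divpK // dvdp_XsubCl /root !hornerE subrr //.
Qed.

Lemma size_q alpha h : size (qq alpha h) = (size h).-1.
Proof.
have [le1|gt1] := leqP (size h) 1.
  rewrite /qq; have -> : h - h.[alpha]%:P = 0.
    by rewrite {1}(size1_polyC le1) [in X in _ - X](size1_polyC le1) hornerC subrr.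
  by rewrite div0p size_poly0; case: (size h) le1 => [|[]].
have sz : size (h - h.[alpha]%:P) = size h.
  rewrite size_polyDl // size_polyN size_polyC; case: (_ != 0) => //; lia.
have qn0 : qq alpha h != 0.
  apply/eqP=> q0; move: (q_fact alpha h); rewrite q0 mul0r => /esym/eqP.
  by rewrite -size_poly_eq0 sz; lia.
move: sz; rewrite -q_fact size_mul // ?size_XsubC; last by rewrite polyXsubC_eq0.
by move=> <-; rewrite addn2.
Qed.

Lemma DD_add alpha h f g : DD alpha h (f + g) = DD alpha h f + DD alpha h g.
Proof. rewrite /DD derivD mulrDr; ring. Qed.

Lemma DD_scale alpha h (c : C) f : DD alpha h (c *: f) = c *: DD alpha h f.
Proof. by rewrite /DD derivZ scalerBr scalerAr. Qed.

Lemma DD_opp alpha h f : DD alpha h (- f) = - DD alpha h f.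
Proof. by rewrite -scaleN1r DD_scale scaleN1r. Qed.

Lemma DD_X alpha h f : 'X * DD alpha h f = DD alpha h ('X * f) + f.
Proof. rewrite /DD derivM derivX; ring. Qed.

Lemma DD_comb alpha h (s c t b : C) g u :
  DD alpha h (s *: (c *: g + 'X * u + g - t *: u) + b *: g) =
  s *: (c *: DD alpha h g + DD alpha h ('X * u) + DD alpha h g - t *: DD alpha h u)
  + b *: DD alpha h g.
Proof. by rewrite !(DD_add, DD_opp, DD_scale). Qed.

Lemma DD0 alpha h : DD alpha h 0 = 0.
Proof. by rewrite /DD deriv0 mulr0 subr0. Qed.

Section Closure.
Variables (n : nat) (a : nat -> C) (lambda alpha : C) (h : {poly C}) (W : {poly C} -> Prop).
Hypothesis HW : is_submodule n a lambda alpha h W.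

Lemma W0 : W 0. Proof. by case: HW. Qed.
Lemma WD f g : W f -> W g -> W (f + g). Proof. by case: HW => _ H _ _; apply: H. Qed.
Lemma WZ c f : W f -> W (c *: f). Proof. by case: HW => _ _ H _; apply: H. Qed.
Lemma WB f g : W f -> W g -> W (f - g).
Proof. by move=> Hf Hg; rewrite -scaleN1r; apply: WD => //; apply: WZ. Qed.
Lemma Wb k f : (n < k)%N -> W f -> W (bact n a lambda alpha h k f).
Proof. by case: HW => _ _ _ H; apply: H. Qed.
End Closure.
Arguments W0 {n a lambda alpha h W} HW.
Arguments WD {n a lambda alpha h W} HW {f g}.
Arguments WZ {n a lambda alpha h W} HW c {f}.
Arguments WB {n a lambda alpha h W} HW {f g}.
Arguments Wb {n a lambda alpha h W} HW {k f}.

Lemma not_alpha0 n a lambda h :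
  ~ irreducible_bmodule n a lambda 0 h.
Proof.
case=> _ irr.
have sub : is_submodule n a lambda 0 h (fun f => f.[0] = 0).
  split.
  - by rewrite horner0.
  - by move=> f g; rewrite hornerD => -> ->; rewrite addr0.
  - by move=> c f; rewrite hornerZ => ->; rewrite mulr0.
  - move=> k f _ f0; rewrite /bact /opG !hornerE f0 /=.
    by rewrite !(mulr0, mul0r, addr0, subr0, add0r, mulr0).
case: (irr _ sub) => [H|H].
  by move: (H 'X); rewrite hornerX => /(_ erefl) /eqP; rewrite polyX_eq0.
by move: (H 1); rewrite hornerC => /eqP; rewrite oner_eq0.
Qed.

Lemma not_const n a lambda alpha (h : {poly C}) :
  (size h <= 1)%N -> ~ irreducible_bmodule n a lambda alpha h.
Proof.
move=> sh [_ irr].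
have q0 : qq alpha h = 0 by apply/eqP; rewrite -size_poly_eq0 size_q; lia.
have sub : is_submodule n a lambda alpha h (fun f => (size f <= 1)%N).
  split.
  - by rewrite size_poly0.
  - by move=> f g sf sg; apply: leq_trans (size_polyD _ _) _; rewrite geq_max sf sg.
  - by move=> c f sf; apply: leq_trans (size_scale_leq _ _) _.
  - move=> k f _ sf.
    have DDf : DD alpha h f = 0 by rewrite /DD q0 mul0r (size1_polyC sf) derivC subr0.
    rewrite /bact /opG /opF -/(DD alpha h f) DDf !(mulr0, scaler0, addr0, subr0).
    rewrite scalerA -scalerDl.
    by apply: leq_trans (size_scale_leq _ _) _.
case: (irr _ sub) => [H|H].
  by move: (H 1); rewrite size_poly1 => /(_ isT) /eqP; rewrite oner_eq0.
by move: (H 'X); rewrite size_polyX.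
Qed.

Lemma not_big n a lambda alpha (h : {poly C}) :
  (2 < size h)%N -> ~ irreducible_bmodule n a lambda alpha h.
Proof.
move=> sh [_ irr].
have sq : (1 < size (qq alpha h))%N by rewrite size_q; lia.
have sub : is_submodule n a lambda alpha h (fun f => exists g, f = DD alpha h g).
  split.
  - by exists 0; rewrite DD0.
  - by move=> f g [f1 ->] [g1 ->]; exists (f1 + g1); rewrite DD_add.
  - by move=> c f [f1 ->]; exists (c *: f1); rewrite DD_scale.
  - move=> k f _ [g ->].
    rewrite /bact /opG /opF -/(DD alpha h (DD alpha h g)).
    set s := (_ * _ ^+ k); set t := (_ * alpha); set b := (aext _ _ _ - _).
    exists (s *: (h.[alpha] *: g + 'X * DD alpha h g + g - t *: DD alpha h g) + b *: g).
    by rewrite DD_comb DD_X !addrA.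
case: (irr _ sub) => [H|H].
  have : qq alpha h = 0.
    apply: H; exists 1; rewrite /DD derivC subr0 mulr1 //.
  by move/eqP; rewrite -size_poly_eq0; lia.
case: (H 1) => g /esym g1.
have [g0|gn0] := eqVneq g 0.
  by move: g1; rewrite g0 DD0 => /eqP; rewrite eq_sym oner_eq0.
have qn0 : qq alpha h != 0 by rewrite -size_poly_eq0; lia.
have szm : size (qq alpha h * g) = (size (qq alpha h) + size g).-1 by rewrite size_mul.
have sgd := lt_size_deriv gn0.
have : size (DD alpha h g) = size (qq alpha h * g).
  rewrite /DD size_polyDl // size_polyN szm.
  move: sq sgd; move: (size (qq alpha h)) (size g^`()) (size g) => x y z; lia.
rewrite g1 size_poly1 szm.
have : (0 < size g)%N by rewrite size_poly_gt0.
lia.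
Qed.


Lemma irr_pos n a lambda alpha (h : {poly C}) :
  lambda != 0 -> alpha != 0 -> size h = 2%N -> irreducible_bmodule n a lambda alpha h.
Proof.
move=> lnz anz sh.
split; first by exists 1; rewrite oner_eq0.
move=> W HW.
case: (classic (exists f, W f /\ f != 0)) => [[f0 [Wf0 nz]]|none]; last first.
  left=> f Wf; case: (eqVneq f 0) => // fn; exfalso; apply: none; by exists f.
right.
have sq : size (qq alpha h) = 1%N by rewrite size_q sh.
set c := (qq alpha h)`_0.
have qc : qq alpha h = c%:P by apply: size1_polyC; rewrite sq.
have cn0 : c != 0.
  by apply/eqP=> c0; move: sq; rewrite qc c0 size_poly0.
have lt1 : (n < 2 * n + 1)%N by lia.
have lt2 : (n < 2 * n + 2)%N by lia.
have lt3 : (n < 2 * n + 3)%N by lia.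
have WDD : forall f, W f -> W (DD alpha h f).
  move=> f Wf.
  have E := stepA_u n a lambda alpha h f lnz.
  have nz2 : (-2 * alpha * lambda ^+ (2 * n + 3)) != 0.
    by rewrite !mulf_neq0 ?expf_neq0 // oppr_eq0 pnatr_eq0.
  have : W ((-2 * alpha * lambda ^+ (2 * n + 3)) *: DD alpha h f).
    rewrite E; apply: (WD HW); last exact: (Wb HW).
    apply: (WB HW); apply: (WZ HW); exact: (Wb HW).
  move/(WZ HW (-2 * alpha * lambda ^+ (2 * n + 3))^-1).
  by rewrite scalerA mulVf // scale1r.
have WXD : forall f, W f -> W ('X * DD alpha h f).
  move=> f Wf.
  have E := stepA_v n a lambda alpha h f.
  have nz2 : lambda ^+ (2 * n + 3) != 0 by rewrite expf_neq0.
  have : W (lambda ^+ (2 * n + 3) *: ('X * DD alpha h f)).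
    rewrite E; apply: (WB HW); last exact: (WZ HW).
    apply: (WD HW); last by apply: (WZ HW); apply: WDD.
    apply: (WB HW); apply: (WZ HW); exact: (Wb HW).
  move/(WZ HW (lambda ^+ (2 * n + 3))^-1).
  by rewrite scalerA mulVf // scale1r.
have Wder : forall f, W f -> W f^`().
  move=> f Wf.
  have -> : f^`() = c *: f - DD alpha h f by rewrite /DD qc mul_polyC opprB addrC subrK.
  by apply: (WB HW); [apply: (WZ HW) | apply: WDD].
have W1 : W 1.
  suff: forall N (f : {poly C}), (size f <= N)%N -> f != 0 -> W f -> W 1 by move/(_ _ f0 (leqnn _) nz Wf0).
  elim=> [|N IH] f sf fn Wf.
    by move: fn; rewrite -size_poly_eq0; lia.
  case: (leqP (size f) 1) => s1.
    move: Wf fn; rewrite (size1_polyC s1) polyC_eq0 => Wf fn.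
    have := WZ HW (f`_0)^-1 Wf.
    by rewrite -mul_polyC -polyCM mulVf // polyC1 mulr1.
  apply: (IH f^`()); last exact: Wder.
    have := lt_size_deriv fn; lia.
  apply/eqP=> d0.
  have := congr1 (fun p : {poly C} => p`_(size f).-2) d0.
  rewrite coef_deriv coef0 => /eqP.
  have -> : (size f).-2.+1 = (size f).-1 by lia.
  rewrite -mulr_natr mulf_eq0 -lead_coefE lead_coef_eq0 (negbTE fn) /=.
  have -> : (size f).-1 = (size f).-2.+1 by lia.
  by rewrite pnatr_eq0.
have WX : forall j, W 'X^j.
  elim=> [|j IH]; first by rewrite expr0.
  have XX : 'X * ('X^(j.-1) *+ j) = j%:R *: ('X^j : {poly C}).
    case: j {IH} => [|j]; first by rewrite mulr0n mulr0 scale0r.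
    by rewrite mulrnAr -exprS scaler_nat.
  have E : 'X^(j.+1) = c^-1 *: ('X * DD alpha h ('X^j) + j%:R *: 'X^j).
    rewrite /DD qc derivXn mul_polyC mulrBr XX -scalerAr -exprS subrK.
    by rewrite scalerA mulVf // scale1r.
  rewrite E; apply: (WZ HW); apply: (WD HW); [exact: WXD | exact: (WZ HW)].
move=> g; rewrite -[g]coefK poly_def.
apply: (big_ind W); [exact: (W0 HW) | move=> x y; exact: (WD HW) | move=> i _; apply: (WZ HW); exact: WX].
Qed.

Theorem proposition5p1 (n : nat) (a : nat -> C) (lambda alpha : C)
    (h : {poly C}) :
  (0 < n)%N -> lambda != 0 ->
  irreducible_bmodule n a lambda alpha h <-> (alpha != 0 /\ size h = 2%N).
Proof.
move=> _ lnz; split.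
  move=> irr; split.
    by apply/eqP=> a0; move: irr; rewrite a0; apply: not_alpha0.
  case: (ltngtP (size h) 2) => // s.
    by exfalso; move: irr; apply: not_const; lia.
  by exfalso; move: irr; apply: not_big.
by case=> anz sh; apply: irr_pos.
Qed.
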